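(* Let $(X_1,d_1)$ and $(X_2,d_2)$ be metric spaces admitting weak convergences $w_1,w_2$ respectively, and let $1\le q<\infty$. Then $w_1\otimes w_2$ is a weak convergence for $(X_1\times X_2,d_1\otimes_q d_2)$.
   Context: A convergence $c$ on a set $X$ is a rule assigning at most one point of $X$ as the ''limit'' of each sequence in $X$, such that whenever a sequence has limit $x$, every subsequence also has limit $x$; we write $x_n\to x$ in $c$. A convergence $w$ on $X$ is a weak convergence for $(X,d)$ if: (W1) whenever $\{x_n\}$ and $y$ in $X$ satisfy $\sup_n d(x_n,y)<\infty$, there are a subsequence $\{n_k\}$ and $x\in X$ with $x_{n_k}\to x$ in $w$; (W2) whenever $x_n\to x$ in $w$, $d(x,y)\le\liminf_n d(x_n,y)$ for all $y\in X$; (W3) whenever $x_n\to x$ in $w$ and $d(x_n,y)\to d(x,y)$ for some $y\in X$, then $d(x_n,x)\to0$. The metric $d_1\otimes_q d_2$ on $X_1\times X_2$ is $((x_1,x_2),(x_1',x_2'))\mapsto (d_1^q(x_1,x_1')+d_2^q(x_2,x_2'))^{1/q}$. The convergence $w_1\otimes w_2$ on $X_1\times X_2$ declares $(x_{1,n},x_{2,n})\to(x_1,x_2)$ iff $x_{1,n}\to x_1$ in $w_1$ and $x_{2,n}\to x_2$ in $w_2$. *)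

(* Defs.v *)
From HB Require Import structures.
From mathcomp Require Import all_boot all_order all_algebra.
From mathcomp Require Import all_classical all_reals all_analysis.
Set Implicit Arguments. Unset Strict Implicit. Unset Printing Implicit Defensive.
Import Order.TTheory GRing.Theory Num.Theory.
Import numFieldNormedType.Exports.
Local Open Scope classical_set_scope.
Local Open Scope ring_scope.

Definition is_metric {R : realType} {X : Type} (d : X -> X -> R) : Prop :=
  (forall x y, d x y = 0 <-> x = y) /\
  (forall x y, d x y = d y x) /\
  (forall x y z, d x z <= d x y + d y z).

Definition is_convergence {X : Type} (c : (nat -> X) -> X -> Prop) : Prop :=
  (forall u x y, c u x -> c u y -> x = y) /\
  (forall u x (phi : nat -> nat), c u x ->
      (forall n m, (n < m)%N -> (phi n < phi m)%N) -> c (u \o phi) x).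

Definition weak_convergence {R : realType} {X : Type} (d : X -> X -> R)
    (w : (nat -> X) -> X -> Prop) : Prop :=
  is_convergence w /\
  (* (W1) *)
  (forall (u : nat -> X) (y : X), (exists M : R, forall n, d (u n) y <= M) ->
     exists (phi : nat -> nat) (x : X),
       (forall n m, (n < m)%N -> (phi n < phi m)%N) /\ w (u \o phi) x) /\
  (* (W2) *)
  (forall u x, w u x -> forall y,
     ((d x y)%:E <= limn_einf (fun n => (d (u n) y)%:E))%E) /\
  (* (W3) *)
  (forall u x, w u x -> forall y,
     (fun n => d (u n) y) @ \oo --> d x y ->
     (fun n => d (u n) x) @ \oo --> (0 : R)).

Definition prod_metric {R : realType} {X1 X2 : Type} (q : R)
    (d1 : X1 -> X1 -> R) (d2 : X2 -> X2 -> R) : X1 * X2 -> X1 * X2 -> R :=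
  fun p p' => powR (powR (d1 p.1 p'.1) q + powR (d2 p.2 p'.2) q) q^-1.

Definition prod_conv {X1 X2 : Type} (w1 : (nat -> X1) -> X1 -> Prop)
    (w2 : (nat -> X2) -> X2 -> Prop) : (nat -> X1 * X2) -> X1 * X2 -> Prop :=
  fun u p => w1 (fun n => (u n).1) p.1 /\ w2 (fun n => (u n).2) p.2.

(* Main.v *)
From HB Require Import structures.
From mathcomp Require Import all_boot all_order all_algebra.
From mathcomp Require Import all_classical all_reals all_analysis.
From mathcomp Require Import lra.
Require Import Defs.
Import Order.TTheory GRing.Theory Num.Theory.
Import numFieldNormedType.Exports.
Local Open Scope classical_set_scope.
Local Open Scope ring_scope.


Definition LB {R : realType} (u : nat -> R) (a : R) :=
  forall e : R, 0 < e -> \forall n \near \oo, a - e < u n.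
Definition UB {R : realType} (u : nat -> R) (a : R) :=
  forall e : R, 0 < e -> \forall n \near \oo, u n < a + e.

Lemma liminfP {R : realType} (u : nat -> R) (l : R) :
  (l%:E <= limn_einf (fun n => (u n)%:E))%E <-> LB u l.
Proof.
have E : limn_einf (fun n => (u n)%:E) =
   ereal_sup (range (einfs (fun n => (u n)%:E))).
  by rewrite limn_einf_lim; apply/cvg_lim => //; exact: cvg_einfs_sup.
rewrite E; split.
- move=> H e e0.
  have : ((l - e)%:E < ereal_sup (range (einfs (fun n => (u n)%:E))))%E.
    by apply: (lt_le_trans _ H); rewrite lte_fin; lra.
  move=> /ereal_sup_gt [_ [N _ <-]] hN.
  exists N => // n /= Nn.
  rewrite -lte_fin; apply: (lt_le_trans hN).
  by apply: ereal_inf_lbound; exists n.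
- move=> H; apply/lee_subgt0Pr => e e0.
  have [N _ HN] := H e e0.
  apply: (le_trans _ (@ereal_sup_ubound _ _ (einfs (fun n => (u n)%:E) N) _)); last by exists N.
  apply: le_ereal_inf_tmp => _ [n /= Nn <-].
  by rewrite -EFinB lee_fin ltW //; apply: HN.
Qed.


Lemma cvg_LBUB {R : realType} (u : nat -> R) a : u @ \oo --> a <-> LB u a /\ UB u a.
Proof.
rewrite cvgrPdist_lt; split.
- move=> H; split => e e0; apply: filterS (H e e0) => n;
    rewrite ltr_distlC => /andP[] //.
- move=> [H1 H2] e e0; apply: filterS2 (H1 e e0) (H2 e e0) => n h1 h2.
  by rewrite ltr_distlC h1 h2.
Qed.

Lemma LB_add {R : realType} (u v : nat -> R) (a b : R) : LB u a -> LB v b -> LB (fun n => u n + v n) (a + b).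
Proof.
move=> H1 H2 e e0.
have e2 : 0 < e / 2 by rewrite divr_gt0.
apply: filterS2 (H1 _ e2) (H2 _ e2) => n h1 h2; lra.
Qed.
Arguments LB_add {R u v a b}.

Lemma LB_UB_cvg {R : realType} (u v : nat -> R) (a b : R) : (fun n => u n + v n) @ \oo --> a + b ->
  LB u a -> LB v b -> u @ \oo --> a.
Proof.
move=> /cvg_LBUB [_ H] H1 H2; apply/cvg_LBUB; split => // e e0.
have e2 : 0 < e / 2 by rewrite divr_gt0.
apply: filterS2 (H _ e2) (H2 _ e2) => n h1 h2; lra.
Qed.
Arguments LB_UB_cvg {R u v a b}.

Lemma powRK {R : realType} (p x : R) : 0 < p -> 0 <= x -> powR (powR x p) p^-1 = x.
Proof. by move=> p0 x0; rewrite -powRrM mulfV ?gt_eqF // powRr1. Qed.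

Lemma powRKV {R : realType} (p x : R) : 0 < p -> 0 <= x -> powR (powR x p^-1) p = x.
Proof. by move=> p0 x0; rewrite -powRrM mulVf ?gt_eqF // powRr1. Qed.

Lemma powR_lt {R : realType} (p x y : R) : 0 < p -> 0 <= x -> 0 <= y -> x < y -> powR x p < powR y p.
Proof. by move=> p0 x0 y0 xy; apply: gt0_ltr_powR. Qed.

Lemma powA {R : realType} (p a e : R) : 0 < p -> 0 <= a -> 0 < e ->
  exists2 d, 0 < d & forall x, 0 <= x -> a - d < x -> powR a p - e < powR x p.
Proof.
move=> p0 a0 e0.
have [t0|t0] := leP (powR a p - e / 2) 0.
  exists 1 => // x x0 _; have := powR_ge0 x p; lra.
set t := powR a p - e / 2 in t0 *.
have ip0 : 0 < p^-1 by rewrite invr_gt0.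
have ta : powR t p^-1 < a.
  rewrite -[X in _ < X](powRK _ _ p0 a0); apply: powR_lt;
    [done | exact: ltW | exact: powR_ge0 | rewrite /t; lra].
exists (a - powR t p^-1); first lra.
move=> x x0 hx.
have : t < powR x p.
  rewrite -[X in X < _](powRKV _ _ p0 (ltW t0)); apply: powR_lt;
    [done | exact: powR_ge0 | done | lra].
rewrite /t; lra.
Qed.

Lemma powB {R : realType} (p a e : R) : 0 < p -> 0 <= a -> 0 < e ->
  exists2 d, 0 < d & forall x, 0 <= x -> x < a + d -> powR x p < powR a p + e.
Proof.
move=> p0 a0 e0.
set t := powR a p + e.
have t0 : 0 < t by rewrite /t; have := powR_ge0 a p; lra.
have ip0 : 0 < p^-1 by rewrite invr_gt0.
have ta : a < powR t p^-1.
  rewrite -[X in X < _](powRK _ _ p0 a0); apply: powR_lt;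
    [done | exact: powR_ge0 | exact: ltW | rewrite /t; lra].
exists (powR t p^-1 - a); first lra.
move=> x x0 hx.
have : powR x p < t.
  rewrite -[X in _ < X](powRKV _ _ p0 (ltW t0)); apply: powR_lt;
    [done | done | exact: powR_ge0 | lra].
by [].
Qed.

Lemma LB_pow {R : realType} (p : R) (u : nat -> R) (a : R) : 0 < p -> 0 <= a -> (forall n, 0 <= u n) -> LB u a ->
  LB (fun n => powR (u n) p) (powR a p).
Proof.
move=> p0 a0 u0 H e e0; have [d d0 Hd] := powA _ _ _ p0 a0 e0.
by apply: filterS (H d d0) => n hn; apply: Hd.
Qed.
Arguments LB_pow {R p u a}.

Lemma UB_pow {R : realType} (p : R) (u : nat -> R) (a : R) : 0 < p -> 0 <= a -> (forall n, 0 <= u n) -> UB u a ->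
  UB (fun n => powR (u n) p) (powR a p).
Proof.
move=> p0 a0 u0 H e e0; have [d d0 Hd] := powB _ _ _ p0 a0 e0.
by apply: filterS (H d d0) => n hn; apply: Hd.
Qed.
Arguments UB_pow {R p u a}.

Lemma cvg_pow {R : realType} (p : R) (u : nat -> R) (a : R) : 0 < p -> 0 <= a -> (forall n, 0 <= u n) -> u @ \oo --> a ->
  (fun n => powR (u n) p) @ \oo --> powR a p.
Proof.
move=> p0 a0 u0 /cvg_LBUB [H1 H2]; apply/cvg_LBUB; split.
  exact: LB_pow. exact: UB_pow.
Qed.
Arguments cvg_pow {R p u a}.


Lemma cvg_unpow {R : realType} (p : R) (u : nat -> R) (a : R) : 0 < p -> 0 <= a ->
  (forall n, 0 <= u n) -> (fun n => powR (u n) p) @ \oo --> powR a p -> u @ \oo --> a.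
Proof.
move=> p0 a0 u0 H.
have ip0 : 0 < p^-1 by rewrite invr_gt0.
have := cvg_pow ip0 (powR_ge0 a p) (fun n => powR_ge0 _ _) H.
rewrite powRK // => H'.
have E : u = (fun n => powR (powR (u n) p) p^-1).
  by apply/funext => n; rewrite powRK.
by rewrite E.
Qed.
Arguments cvg_unpow {R p u a}.

Lemma metric_ge0 {R : realType} {X : Type} (d : X -> X -> R) :
  is_metric d -> forall x y, 0 <= d x y.
Proof.
move=> [h0 [hs ht]] x y; have := ht x y x.
rewrite (hs y x) (proj2 (h0 x x) erefl); lra.
Qed.

Lemma le_prod1 {R : realType} (q a b : R) : 0 < q -> 0 <= a -> 0 <= b ->
  a <= powR (powR a q + powR b q) q^-1.
Proof.
move=> q0 a0 b0.
have iq0 : 0 <= q^-1 by rewrite invr_ge0 ltW.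
rewrite -[X in X <= _](powRK _ _ q0 a0).
apply: (ge0_ler_powR iq0).
- by rewrite nnegrE powR_ge0.
- by rewrite nnegrE addr_ge0 ?powR_ge0.
- by have := powR_ge0 b q; lra.
Qed.

Theorem proposition2p8 (R : realType) (X1 X2 : Type)
  (d1 : X1 -> X1 -> R) (d2 : X2 -> X2 -> R)
  (w1 : (nat -> X1) -> X1 -> Prop) (w2 : (nat -> X2) -> X2 -> Prop) (q : R) :
  is_metric d1 -> is_metric d2 ->
  weak_convergence d1 w1 -> weak_convergence d2 w2 ->
  1 <= q ->
  weak_convergence (prod_metric q d1 d2) (prod_conv w1 w2).
Proof.
move=> m1 m2 [[U1 S1] [W11 [W21 W31]]] [[U2 S2] [W12 [W22 W32]]] q1.
have q0 : 0 < q by lra.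
have iq0 : 0 < q^-1 by rewrite invr_gt0.
have p1 := metric_ge0 _ m1; have p2 := metric_ge0 _ m2.
split; [split|split; [|split]].
- move=> u x y [h1 h2] [h1' h2'].
  case: x h1 h2 => x1 x2 /= h1 h2; case: y h1' h2' => y1 y2 /= h1' h2'.
  by rewrite (U1 _ _ _ h1 h1') (U2 _ _ _ h2 h2').
- move=> u x phi [h1 h2] hphi; split.
  + exact: (S1 _ _ _ h1 hphi).
  + exact: (S2 _ _ _ h2 hphi).
- move=> u y [M HM].
  have B1 : forall n, d1 (u n).1 y.1 <= M.
    move=> n; apply: le_trans (HM n); rewrite /prod_metric; exact: le_prod1.
  have [phi [x1 [hphi hx1]]] := W11 (fun n => (u n).1) y.1 (ex_intro _ M B1).
  have B2 : forall n, d2 (u (phi n)).2 y.2 <= M.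
    move=> n; apply: le_trans (HM (phi n)); rewrite /prod_metric addrC; exact: le_prod1.
  have [psi [x2 [hpsi hx2]]] := W12 (fun n => (u (phi n)).2) y.2 (ex_intro _ M B2).
  exists (phi \o psi), (x1, x2); split.
  + by move=> n m nm; apply: hphi; apply: hpsi.
  + split => /=; [exact: (S1 _ _ _ hx1 hpsi) | exact: hx2].
- move=> u x [h1 h2] y; apply/liminfP.
  have L1 := proj1 (liminfP _ _) (W21 _ _ h1 y.1).
  have L2 := proj1 (liminfP _ _) (W22 _ _ h2 y.2).
  have LP1 := LB_pow q0 (p1 _ _) (fun n => p1 _ _) L1.
  have LP2 := LB_pow q0 (p2 _ _) (fun n => p2 _ _) L2.
  have LS := LB_add LP1 LP2.
  rewrite /prod_metric.
  exact: (LB_pow iq0 (addr_ge0 (powR_ge0 _ _) (powR_ge0 _ _)) (fun n => addr_ge0 (powR_ge0 _ _) (powR_ge0 _ _)) LS).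
- move=> u x [h1 h2] y Hc.
  have L1 := proj1 (liminfP _ _) (W21 _ _ h1 y.1).
  have L2 := proj1 (liminfP _ _) (W22 _ _ h2 y.2).
  have LP1 := LB_pow q0 (p1 _ _) (fun n => p1 _ _) L1.
  have LP2 := LB_pow q0 (p2 _ _) (fun n => p2 _ _) L2.
  have Hs := cvg_pow q0 (powR_ge0 _ _) (fun n => powR_ge0 _ _) Hc.
  move: Hs; rewrite /prod_metric powRKV //; last by rewrite addr_ge0 ?powR_ge0.
  have E : (fun n => powR (powR (powR (d1 (u n).1 y.1) q + powR (d2 (u n).2 y.2) q) q^-1) q)
     = (fun n => powR (d1 (u n).1 y.1) q + powR (d2 (u n).2 y.2) q).
    by apply/funext => n; rewrite powRKV // addr_ge0 ?powR_ge0.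
  rewrite E => Hs.
  have ca := LB_UB_cvg Hs LP1 LP2.
  have E2 : (fun n => powR (d1 (u n).1 y.1) q + powR (d2 (u n).2 y.2) q)
     = (fun n => powR (d2 (u n).2 y.2) q + powR (d1 (u n).1 y.1) q).
    by apply/funext => n; rewrite addrC.
  move: Hs; rewrite E2 (addrC (powR (d1 x.1 y.1) q)) => Hs.
  have cb := LB_UB_cvg Hs LP2 LP1.
  have a1 := cvg_unpow q0 (p1 _ _) (fun n => p1 _ _) ca.
  have b1 := cvg_unpow q0 (p2 _ _) (fun n => p2 _ _) cb.
  have c1 := W31 _ _ h1 y.1 a1.
  have c2 := W32 _ _ h2 y.2 b1.
  have Z : powR (powR 0 q + powR 0 q) q^-1 = 0 :> R.
    by rewrite !powR0 ?gt_eqF // addr0 powR0 // gt_eqF.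
  rewrite -Z.
  apply: (cvg_pow iq0); first by rewrite addr_ge0 ?powR_ge0.
    by move=> n; rewrite addr_ge0 ?powR_ge0.
  apply: cvgD.
  + exact: (cvg_pow q0 (lexx 0) (fun n => p1 _ _) c1).
  + exact: (cvg_pow q0 (lexx 0) (fun n => p2 _ _) c2).
Qed.
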